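(* Let $d>0$, $\gamma>0$, $\beta>0$ and $\nu\ge 0$ be fixed with $\mathcal{R}_0=\beta/(\gamma+d)>1$. For each delay $\tau\ge 0$ let $(S^*,I^*(\tau))$ be the endemic equilibrium of the system described in the context, and let $$F(\omega,\tau)=\omega^2\left(\omega^4+a_1(\tau)\,\omega^2+a_0(\tau)\right),$$ with $a_1,a_0$ as defined in the context. Then the set of delays $\tau\ge 0$ for which $F(\omega,\tau)=0$ has a positive root $\omega>0$ is bounded, i.e. it is contained in a bounded interval $[0,\tau_{max})$ with $\tau_{max}<\infty$.
   Context: The model is the delay system for the fractions of susceptible $S$ and infected $I$ individuals (with immune fraction $R=1-S-I$): $$\dot S(t)=d(1-S(t))-\beta I(t)S(t)+I(t-\tau)\big(\gamma+\nu\beta(1-S(t-\tau)-I(t-\tau))\big)\exp\!\Big(-d\tau-\nu\beta\int_{t-\tau}^{t}I(u)\,du\Big),$$ $$\dot I(t)=\beta I(t)S(t)-(\gamma+d)I(t),$$ where $d>0$ is the per capita mortality (and birth) rate, $\beta$ the transmission rate, $\gamma$ the recovery rate, $\nu\ge0$ the boosting force and $\tau>0$ the maximal duration of immunity without boosting. When $\mathcal{R}_0=\beta/(\gamma+d)>1$ there is a unique endemic equilibrium $(S^*,I^* )$ with $S^*=1/\mathcal{R}_0$ and $I^*=I^*(\tau)>0$ the solution of $d(1-S^* )-\beta I^*S^*+(\gamma+\nu\beta(1-S^*-I^* ))I^*e^{-d\tau-\nu\beta\tau I^*}=0$. Define $\mu(\tau)=\beta I^*e^{-\tau(d+\nu\beta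 I^* )}$, $\sigma(\tau)=\gamma+\nu\beta(1-1/\mathcal{R}_0-I^* )$, and $$a_1(\tau)=d^2+\beta^2(I^* )^2-2\beta\gamma I^*-\nu^2\mu^2,$$ $$a_0(\tau)=(\beta I^*(\gamma+d))^2-2\nu\beta I^*(d+\beta I^* )\mu\sigma-(\sigma-\nu\beta I^* )^2\mu^2-2\nu^2\mu^2\beta I^*\sigma.$$ The function $F(\omega,\tau)$ equals $|P(i\omega,\tau)|^2-|Q(i\omega,\tau)|^2$ where $P(\lambda,\tau)=\lambda^3+\lambda^2(d+\beta I^* )+\lambda\beta(\gamma+d)I^*+\nu\beta I^*\mu\sigma$ and $Q(\lambda,\tau)=(\lambda^2\nu-\lambda(\sigma-\nu\beta I^* )-\nu\beta I^*\sigma)\mu$; the characteristic equation of the linearization at the endemic equilibrium is $P(\lambda,\tau)+Q(\lambda,\tau)e^{-\lambda\tau}=0$, and it has a purely imaginary root $i\omega$, $\omega>0$, only if $F(\omega,\tau)=0$. *)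

(* Defs.v *)
From Stdlib Require Import Reals Lra.
Open Scope R_scope.

(* Model parameters: d (mortality), beta (transmission), gamma (recovery),
   nu (boosting force).  Istar is the value Istar(tau). *)

Definition basicR0 (d beta gamma : R) : R := beta / (gamma + d).

Definition Sstar (d beta gamma : R) : R := / basicR0 d beta gamma.

Definition endemic_eq (d beta gamma nu tau I : R) : Prop :=
  let S := Sstar d beta gamma in
  d * (1 - S) - beta * I * S
  + (gamma + nu * beta * (1 - S - I)) * I * exp (- d * tau - nu * beta * tau * I) = 0.

Definition mu (d beta nu tau Is : R) : R :=
  beta * Is * exp (- tau * (d + nu * beta * Is)).

Definition sigma (d beta gamma nu Is : R) : R :=
  gamma + nu * beta * (1 - / basicR0 d beta gamma - Is).

Definition a1 (d beta gamma nu tau Is : R) : R :=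
  let m := mu d beta nu tau Is in
  d ^ 2 + beta ^ 2 * Is ^ 2 - 2 * beta * gamma * Is - nu ^ 2 * m ^ 2.

Definition a0 (d beta gamma nu tau Is : R) : R :=
  let m := mu d beta nu tau Is in
  let s := sigma d beta gamma nu Is in
  (beta * Is * (gamma + d)) ^ 2
  - 2 * nu * beta * Is * (d + beta * Is) * m * s
  - (s - nu * beta * Is) ^ 2 * m ^ 2
  - 2 * nu ^ 2 * m ^ 2 * beta * Is * s.

Definition Ffun (d beta gamma nu tau Is omega : R) : R :=
  omega ^ 2 * (omega ^ 4 + a1 d beta gamma nu tau Is * omega ^ 2
               + a0 d beta gamma nu tau Is).

(* Main.v *)
Require Import Defs.
From Stdlib Require Import Reals Lra Psatz.
Open Scope R_scope.

Lemma exp_le_mono x y : x <= y -> exp x <= exp y.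
Proof.
  intros H; destruct (Rle_lt_or_eq_dec _ _ H) as [h|h].
  - left; now apply exp_increasing.
  - subst; lra.
Qed.

Lemma quad_pos c c0 k k0 eps x :
  0 < c0 -> c0 <= c -> 0 < k0 -> k0 <= k ->
  eps < c0 ^ 2 / 4 -> eps < k0 * c0 / 2 -> 0 < x ->
  0 < (x - c) ^ 2 + k * x - eps.
Proof.
  intros. destruct (Rle_dec x (c/2)).
  - assert (c - x >= c0/2) by lra.
    assert ((x-c)^2 >= c0^2/4) by nra. assert (k*x > 0) by nra. nra.
  - assert (x >= c0/2) by lra.
    assert (k * x >= k0 * x) by nra. assert (k0 * x >= k0 * (c0/2)) by (apply Rle_ge, Rmult_le_compat_l; lra).
    assert (0 <= (x-c)^2) by apply pow2_ge_0. lra.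
Qed.

Lemma eps_bound d nu y m s Y Sg dl :
  0 < d -> 0 <= nu -> 0 < y -> y <= Y -> 0 <= m -> m <= Y * dl -> 0 <= dl -> dl <= 1 ->
  0 <= Sg -> - Sg <= s -> s <= Sg ->
  2 * nu * y * (d + y) * m * s + (s - nu * y) ^ 2 * m ^ 2 + 2 * nu ^ 2 * m ^ 2 * y * s
  <= (2 * nu * Y * (d + Y) * Y * Sg + (Sg + nu * Y) ^ 2 * Y ^ 2
      + 2 * nu ^ 2 * Y ^ 3 * Sg) * dl.
Proof.
  intros.
  assert (Hm2 : m ^ 2 <= Y ^ 2 * dl).
  { assert (m^2 <= (Y*dl)^2) by (apply pow_incr; lra).
    assert (dl^2 <= dl) by nra. assert (0 <= Y^2) by apply pow2_ge_0.
    assert (Y^2 * dl^2 <= Y^2 * dl) by (apply Rmult_le_compat_l; lra).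
    assert ((Y*dl)^2 = Y^2*dl^2) by ring. lra. }
  assert (HP : 0 <= nu * y * (d + y) * m) by (repeat apply Rmult_le_pos; lra).
  assert (HP2 : nu * y * (d + y) * m <= nu * Y * (d + Y) * (Y * dl)).
  { apply Rmult_le_compat; try lra. 
    - repeat apply Rmult_le_pos; lra.
    - apply Rmult_le_compat; try nra. }
  assert (T1 : 2 * nu * y * (d + y) * m * s <= 2 * nu * Y * (d + Y) * Y * Sg * dl).
  { assert (nu * y * (d + y) * m * s <= nu * y * (d + y) * m * Sg) by nra. nra. }
  assert (Hs2 : (s - nu * y) ^ 2 <= (Sg + nu * Y) ^ 2).
  { assert (0 <= nu * y <= nu * Y) by nra. nra. }
  assert (T2 : (s - nu * y) ^ 2 * m ^ 2 <= (Sg + nu * Y) ^ 2 * Y ^ 2 * dl).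
  { assert (0 <= (s - nu*y)^2) by apply pow2_ge_0. assert (0 <= m^2) by apply pow2_ge_0.
    rewrite Rmult_assoc. apply Rmult_le_compat; lra. }
  assert (HQ : 0 <= nu ^ 2 * m ^ 2 * y) by (assert (0<=nu^2) by apply pow2_ge_0; assert (0<=m^2) by apply pow2_ge_0; repeat apply Rmult_le_pos; lra).
  assert (HQ2 : nu ^ 2 * m ^ 2 * y <= nu ^ 2 * (Y ^ 2 * dl) * Y).
  { assert (0<=nu^2) by apply pow2_ge_0. assert (0<=m^2) by apply pow2_ge_0. apply Rmult_le_compat; try lra.
    - apply Rmult_le_pos; lra.
    - apply Rmult_le_compat_l; lra. }
  assert (T3 : 2 * nu ^ 2 * m ^ 2 * y * s <= 2 * nu ^ 2 * Y ^ 3 * Sg * dl).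
  { assert (nu ^ 2 * m ^ 2 * y * s <= nu ^ 2 * m ^ 2 * y * Sg) by nra. nra. }
  lra.
Qed.

Lemma Rdiv_le_0_compat_l a b : 0 <= a -> 0 < b -> 0 <= a / b.
Proof. intros; unfold Rdiv; apply Rmult_le_pos; [lra|left; apply Rinv_0_lt_compat; lra]. Qed.

Lemma Rmin_pos' x y : 0 < x -> 0 < y -> 0 < Rmin x y.
Proof. intros; unfold Rmin; destruct (Rle_dec x y); lra. Qed.

Theorem proposition1 (d beta gamma nu : R) (Istar : R -> R)
  (Hd : 0 < d) (Hgamma : 0 < gamma) (Hbeta : 0 < beta) (Hnu : 0 <= nu)
  (HR0 : 1 < basicR0 d beta gamma)
  (HI : forall tau, 0 <= tau ->
          0 < Istar tau /\ endemic_eq d beta gamma nu tau (Istar tau)) :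
  exists tau_max : R,
    forall tau, 0 <= tau ->
      (exists omega, 0 < omega /\ Ffun d beta gamma nu tau (Istar tau) omega = 0) ->
      tau < tau_max.
Proof.
  assert (HS : / basicR0 d beta gamma = (gamma+d)/beta) by (unfold basicR0; field; lra).
  assert (Hbg : gamma + d < beta).
  { unfold basicR0 in HR0. assert (beta/(gamma+d)*(gamma+d) = beta) by (field; lra). nra. }
  set (S := (gamma+d)/beta) in *.
  assert (HS0 : 0 < S) by (unfold S; apply Rdiv_lt_0_compat; lra).
  assert (HS1 : S < 1) by (unfold S; apply (Rmult_lt_reg_r beta); [lra|]; field_simplify; lra).
  set (a := d*(1-S)).
  assert (Ha : 0 < a) by (unfold a; nra).
  set (x0 := a/S).
  assert (Hx0 : 0 < x0) by (unfold x0; apply Rdiv_lt_0_compat; lra).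
  set (Y := 2*x0).
  assert (HY : 0 < Y) by (unfold Y; lra).
  assert (HYdef : Y = 2*x0) by reflexivity.
  assert (Hx0def : x0 * S = a) by (unfold x0; field; lra).
  clearbody Y x0.
  set (b := beta*(1-S)).
  assert (Hb : 0 < b) by (unfold b; nra).
  set (Sg := gamma + nu*b + nu*Y).
  assert (HSg : 0 <= Sg) by (unfold Sg; nra).
  set (c0 := (gamma+d)*x0/2).
  assert (Hc0 : 0 < c0) by (unfold c0; nra).
  set (k0 := d^2/2).
  assert (Hk0 : 0 < k0) by (unfold k0; nra).
  set (Ke := 2 * nu * Y * (d + Y) * Y * Sg + (Sg + nu * Y) ^ 2 * Y ^ 2
      + 2 * nu ^ 2 * Y ^ 3 * Sg).
  set (k1 := (gamma+nu*b)/beta).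
  set (k2 := nu*Y^2/beta).
  set (k3 := nu^2*Y^2).
  assert (Hk1 : 0 <= k1) by (unfold k1; apply Rdiv_le_0_compat_l; nra).
  assert (Hk2 : 0 <= k2) by (unfold k2; apply Rdiv_le_0_compat_l; [apply Rmult_le_pos; [lra|apply pow2_ge_0]|lra]).
  assert (Hk3 : 0 <= k3) by (unfold k3; apply Rmult_le_pos; apply pow2_ge_0).
  assert (HKe : 0 <= Ke).
  { unfold Ke.
    assert (0 <= (Sg + nu*Y)^2 * Y^2) by (apply Rmult_le_pos; apply pow2_ge_0).
    assert (0 <= 2 * nu * Y * (d + Y) * Y * Sg) by (repeat apply Rmult_le_pos; lra).
    assert (0 <= 2 * nu ^ 2 * Y ^ 3 * Sg) by (repeat apply Rmult_le_pos; try lra; try apply pow2_ge_0; apply pow_le; lra).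
    lra. }
  set (K := k1 + k2 + k3 + Ke).
  set (T := Rmin 1 (Rmin (S/2) (Rmin (a/2) (Rmin (d^2/2) (Rmin (c0^2/4) (k0*c0/2)))))).
  assert (HT0 : 0 < T).
  { unfold T. repeat apply Rmin_pos'; try lra; try nra. }
  assert (HT1 : T <= 1 /\ T <= S/2 /\ T <= a/2 /\ T <= d^2/2 /\ T <= c0^2/4 /\ T <= k0*c0/2).
  { unfold T. split; [apply Rmin_l|].
    split; [do 1 (eapply Rle_trans; [apply Rmin_r|]); apply Rmin_l|].
    split; [do 2 (eapply Rle_trans; [apply Rmin_r|]); apply Rmin_l|].
    split; [do 3 (eapply Rle_trans; [apply Rmin_r|]); apply Rmin_l|].
    split; [do 4 (eapply Rle_trans; [apply Rmin_r|]); apply Rmin_l|].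
    do 4 (eapply Rle_trans; [apply Rmin_r|]); apply Rmin_r. }
  destruct HT1 as [T1 [T2 [T3 [T4 [T5 T6]]]]].
  assert (HK : 0 <= K) by (unfold K; lra).
  set (dl := T/(K+1)).
  assert (Hdl0 : 0 < dl) by (unfold dl; apply Rdiv_lt_0_compat; lra).
  assert (HKdl : K * dl < T).
  { assert (dl * (K+1) = T) by (unfold dl; field; lra). nra. }
  assert (Hdl1 : dl <= 1).
  { assert (dl * (K+1) = T) by (unfold dl; field; lra). assert (0 <= K*dl) by nra. nra. }
  exists (1/(d*dl)).
  intros tau Htau [om [Hom HF]].
  destruct (Rlt_or_le tau (1/(d*dl))) as [h|h]; [exact h|exfalso].
  destruct (HI tau Htau) as [HIpos Heq].
  set (I := Istar tau) in *.
  set (e := exp (-(d*tau))).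
  assert (He0 : 0 < e) by apply exp_pos.
  assert (Hedl : e < dl).
  { assert (H1 : e * exp (d*tau) = 1).
    { unfold e. rewrite <- exp_plus. replace (-(d*tau) + d*tau) with 0 by ring. apply exp_0. }
    assert (H2 : 1 + d*tau <= exp (d*tau)) by apply exp_ineq1_le.
    assert (H3 : 1 <= dl * (d * tau)).
    { assert (d*dl*(1/(d*dl)) = 1) by (field; lra). assert (0 < d*dl) by nra.
      assert (d*dl*(1/(d*dl)) <= d*dl*tau) by (apply Rmult_le_compat_l; lra). nra. }
    assert (dl * exp (d*tau) > 1) by nra.
    assert (e * (dl * exp (d*tau)) > e * 1) by (apply Rmult_lt_compat_l; lra). nra. }
  unfold endemic_eq, Sstar in Heq. cbv zeta in Heq. rewrite HS in Heq.
  set (E := exp (- d * tau - nu * beta * tau * I)) in Heq.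
  assert (HE0 : 0 < E) by apply exp_pos.
  assert (Hnbt : 0 <= nu * beta * tau * I) by (repeat apply Rmult_le_pos; lra).
  assert (HEe : E <= e) by (apply exp_le_mono; lra).
  assert (HKk : k1 * dl < T /\ k2 * dl < T /\ k3 * dl < T /\ Ke * dl < T).
  { assert (0 <= k1*dl) by nra. assert (0 <= k2*dl) by nra. assert (0 <= k3*dl) by nra.
    assert (0 <= Ke*dl) by nra. unfold K in HKdl. repeat split; nra. }
  destruct HKk as [Hk1T [Hk2T [Hk3T HkeT]]].
  assert (Hk1b : k1 * beta = gamma + nu*b) by (unfold k1; field; lra).
  assert (Hk2b : k2 * beta = nu * Y^2) by (unfold k2; field; lra).
  assert (Hbdef : b = beta * (1 - S)) by reflexivity.
  assert (Hadef : a = d * (1 - S)) by reflexivity.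
  clearbody a b.
  set (y := beta * I).
  assert (Hy0 : 0 < y) by (unfold y; nra).
  assert (Heq' : y * S = a + (gamma + nu*b) * I * E - nu * y * I * E).
  { unfold y. rewrite Hbdef, Hadef. lra. }
  assert (St1 : (gamma + nu*b) * dl <= beta * S / 2).
  { assert (k1 * dl * beta < S/2 * beta) by (apply Rmult_lt_compat_r; lra). nra. }
  assert (Hgb : 0 <= gamma + nu*b) by nra.
  assert (St1' : (gamma + nu*b) * I * E <= y * S / 2).
  { assert (E <= dl) by lra.
    assert ((gamma + nu*b) * E <= (gamma+nu*b) * dl) by (apply Rmult_le_compat_l; lra).
    assert ((gamma + nu*b) * E * I <= beta * S / 2 * I) by (apply Rmult_le_compat_r; lra).
    unfold y. nra. }
  assert (HnyIE : 0 <= nu * y * I * E) by (repeat apply Rmult_le_pos; lra).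
  assert (HyY : y <= Y).
  { assert (y * S <= 2 * a) by lra. subst Y. rewrite <- Hx0def in *. nra. }
  assert (St2 : nu * y * I * E <= a / 2).
  { assert (Hr : nu * y * I * E * beta = nu * y^2 * E) by (unfold y; ring).
    assert (y^2 <= Y^2) by (apply pow_incr; lra).
    assert (y^2 * E <= Y^2 * dl).
    { apply Rmult_le_compat; try lra. apply pow2_ge_0. }
    assert (nu * (y^2 * E) <= nu * (Y^2 * dl)) by (apply Rmult_le_compat_l; lra).
    assert (k2 * dl * beta < a/2 * beta) by (apply Rmult_lt_compat_r; lra).
    assert (nu * y * I * E * beta <= a/2 * beta) by nra.
    apply (Rmult_le_reg_r beta); lra. }
  assert (Hyx : x0 / 2 <= y).
  { assert (0 <= (gamma + nu*b) * I * E) by (repeat apply Rmult_le_pos; lra).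
    assert (y * S >= a / 2) by lra. apply (Rmult_le_reg_r S); lra. }
  unfold Ffun, a1, a0 in HF. cbv zeta in HF.
  unfold Defs.sigma in HF. rewrite HS in HF.
  set (s := gamma + nu * beta * (1 - S - I)) in HF.
  unfold Defs.mu in HF.
  set (E2 := exp (- tau * (d + nu * beta * I))) in HF.
  assert (HE20 : 0 < E2) by apply exp_pos.
  assert (HE2e : E2 <= e) by (apply exp_le_mono; lra).
  set (m := beta * I * E2) in HF.
  assert (Hm0 : 0 <= m) by (unfold m; fold y; nra).
  assert (HmY : m <= Y * dl) by (unfold m; fold y; apply Rmult_le_compat; lra).
  assert (Hsdef : s = gamma + nu * b - nu * y) by (unfold s, y; rewrite Hbdef; ring).
  assert (Hs1 : s <= Sg) by (unfold Sg; nra).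
  assert (Hs2 : - Sg <= s) by (unfold Sg; nra).
  pose proof (eps_bound d nu y m s Y Sg dl Hd Hnu Hy0 HyY Hm0 HmY (Rlt_le _ _ Hdl0) Hdl1 HSg Hs2 Hs1) as Heps.
  fold Ke in Heps.
  assert (Hm2 : m ^ 2 <= Y ^ 2 * dl).
  { assert (m^2 <= (Y*dl)^2) by (apply pow_incr; lra).
    assert (dl^2 <= dl) by nra. assert (0 <= Y^2) by apply pow2_ge_0.
    assert (Y^2 * dl^2 <= Y^2 * dl) by (apply Rmult_le_compat_l; lra).
    assert ((Y*dl)^2 = Y^2*dl^2) by ring. lra. }
  assert (Hnm : nu^2 * m^2 <= k3 * dl).
  { unfold k3. assert (0 <= nu^2) by apply pow2_ge_0.
    assert (nu^2 * m^2 <= nu^2 * (Y^2*dl)) by (apply Rmult_le_compat_l; lra). lra. }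
  set (eps := 2 * nu * y * (d + y) * m * s + (s - nu * y) ^ 2 * m ^ 2 + 2 * nu ^ 2 * m ^ 2 * y * s) in *.
  set (c := y * (gamma + d)).
  set (k := (d + y)^2 - nu^2 * m^2).
  assert (Hc : c0 <= c).
  { unfold c, c0. assert (x0/2 * (gamma+d) <= y * (gamma+d)) by (apply Rmult_le_compat_r; lra). lra. }
  assert (Hk : k0 <= k).
  { unfold k, k0. assert (d^2 <= (d+y)^2) by (apply pow_incr; lra). lra. }
  assert (Hx : 0 < om^2) by (apply pow_lt; lra).
  pose proof (quad_pos c c0 k k0 eps (om^2) Hc0 Hc Hk0 Hk ltac:(lra) ltac:(lra) Hx) as Q.
  assert (Hid : (om^2 - c)^2 + k * om^2 - eps =
     om ^ 4 + (d ^ 2 + beta ^ 2 * I ^ 2 - 2 * beta * gamma * I - nu ^ 2 * m ^ 2) * om ^ 2 +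
     ((beta * I * (gamma + d)) ^ 2 - 2 * nu * beta * I * (d + beta * I) * m * s -
      (s - nu * beta * I) ^ 2 * m ^ 2 - 2 * nu ^ 2 * m ^ 2 * beta * I * s)).
  { unfold eps, c, k, y. ring. }
  rewrite <- Hid in HF.
  assert (om^2 * ((om^2 - c)^2 + k * om^2 - eps) > 0) by (apply Rmult_lt_0_compat; lra).
  lra.
Qed.
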